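(* Let $n,m\ge 1$, let $A=(a_1,\ldots,a_m)$ be a real $n\times m$ matrix with $a_i\neq 0$ for all $i$, and let $b=(b_1,\ldots,b_m)^\top\in\mathbb{R}^m$ be such that $K=\{x\in\mathbb{R}^n \mid A^\top x\le b\}$ is nonempty. For $\varepsilon\ge 0$ put $b_i(\varepsilon)=b_i+\varepsilon^i$ (so $b_i(0)=b_i$), $H_i(\varepsilon)=\{x\mid a_i^\top x\le b_i(\varepsilon)\}$, $\partial H_i(\varepsilon)=\{x\mid a_i^\top x= b_i(\varepsilon)\}$, $K(\varepsilon)=\bigcap_{i=1}^m H_i(\varepsilon)$, $F_i(\varepsilon)=\partial H_i(\varepsilon)\cap K(\varepsilon)$, and $\mathcal{F}(\varepsilon)=\{J\subseteq\{1,\ldots,m\}\mid J\neq\emptyset,\ \bigcap_{i\in J}F_i(\varepsilon)\neq\emptyset\}$. Let $\mathcal{F}=\mathcal{F}(0)$, and let $\mathcal{F}(0+)$ denote the common value of $\mathcal{F}(\varepsilon)$ for all sufficiently small $\varepsilon>0$ (which is known to exist). Then $\mathcal{F}\supseteq\mathcal{F}(0+)$; consequently $|\mathcal{F}|\ge|\mathcal{F}(0+)|$. *)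

(* Defs.v *)
From HB Require Import structures.
From mathcomp Require Import all_boot all_order all_algebra.
From mathcomp Require Import boolp reals.
Set Implicit Arguments. Unset Strict Implicit. Unset Printing Implicit Defensive.
Import Order.TTheory GRing.Theory Num.Theory.
Local Open Scope ring_scope.

(* Perturbed right-hand side b_i(eps) = b_i + eps^i, with paper index i = val i + 1
   (ordinals 'I_m are 0-based). *)
Definition beps (R : realType) (m : nat) (b : 'cV[R]_m) (eps : R) (i : 'I_m) : R :=
  b i 0 + eps ^+ i.+1.

Definition inK (R : realType) (n m : nat) (A : 'M[R]_(n, m)) (b : 'cV[R]_m)
  (eps : R) (x : 'cV[R]_n) : Prop :=
  forall i : 'I_m, (A^T *m x) i 0 <= beps b eps i.

Definition inFace (R : realType) (n m : nat) (A : 'M[R]_(n, m)) (b : 'cV[R]_m)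
  (eps : R) (i : 'I_m) (x : 'cV[R]_n) : Prop :=
  (A^T *m x) i 0 = beps b eps i /\ inK A b eps x.

Definition faceFam (R : realType) (n m : nat) (A : 'M[R]_(n, m)) (b : 'cV[R]_m)
  (eps : R) : {set {set 'I_m}} :=
  [set J : {set 'I_m} | (J != set0) &&
     `[< exists x : 'cV[R]_n, forall i, i \in J -> inFace A b eps i x >]].

(* Main.v *)
From HB Require Import structures.
From mathcomp Require Import all_boot all_order all_algebra.
From mathcomp Require Import boolp reals.
From mathcomp Require Import ring lra.
Set Implicit Arguments. Unset Strict Implicit. Unset Printing Implicit Defensive.
Import Order.TTheory GRing.Theory Num.Theory.
Local Open Scope ring_scope.
Require Import Defs.

Lemma bounds_seq (R : realType) (L U : seq R) :
  (forall l u, l \in L -> u \in U -> l <= u) ->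
  exists x, (forall l, l \in L -> l <= x) /\ (forall u, u \in U -> x <= u).
Proof.
elim: L => [|l L IH] H.
  clear H; elim: U => [|u U [x [_ Hx]]].
    by exists 0; split.
  exists (Num.min x u); split => // v; rewrite inE => /orP[/eqP->|/Hx hv].
    by rewrite ge_min lexx orbT.
  by rewrite ge_min hv.
have [x [HL HU]] : exists x, (forall l, l \in L -> l <= x) /\ (forall u, u \in U -> x <= u).
  by apply: IH => l' u hl hu; apply: H => //; rewrite inE hl orbT.
exists (Num.max x l); split.
  move=> l'; rewrite inE => /orP[/eqP->|/HL h]; first by rewrite le_max lexx orbT.
  by rewrite le_max h.
by move=> u hu; rewrite ge_max HU //= H // mem_head.
Qed.

Lemma base_case (R : realType) (c w : R) : 0 <= w ->
  (forall eps, 0 < eps -> 0 <= c + eps * w) -> 0 <= c.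
Proof.
move=> hw H; case: (leP 0 c) => // hc.
have he : 0 < - c / (w + 1) by apply: divr_gt0; lra.
have := H _ he.
have -> : c + - c / (w + 1) * w = c / (w + 1) by field; lra.
have : c / (w + 1) < 0 by rewrite pmulr_llt0 ?invr_gt0; lra.
lra.
Qed.
Lemma sum_comb (R : realType) n (u v x : 'I_n -> R) (p q : R) :
  \sum_j (p * u j - q * v j) * x j = p * (\sum_j u j * x j) - q * (\sum_j v j * x j).
Proof.
rewrite !mulr_sumr -sumrB; apply: eq_bigr => j _; ring.
Qed.

Lemma fm (R : realType) n : forall (I : finType) (a : I -> 'I_n -> R) (c w : I -> R),
  (forall k, 0 <= w k) ->
  (forall eps, 0 < eps -> exists x : 'I_n -> R,
      forall k, \sum_j a k j * x j <= c k + eps * w k) ->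
  exists x : 'I_n -> R, forall k, \sum_j a k j * x j <= c k.
Proof.
elim: n => [|n IH] I a c w hw H.
  exists (fun _ => 0) => k; rewrite big_ord0.
  apply: (base_case (hw k)) => eps he.
  by have [x /(_ k)] := H _ he; rewrite big_ord0.
pose al k := a k ord_max.
pose a' k (j : 'I_n) := a k (widen_ord (leqnSn n) j).
pose a2 (z : I + I * I) (j : 'I_n) : R := match z with
  | inl k => if al k == 0 then a' k j else 0
  | inr (p, q) => if (0 < al p) && (al q < 0) then al p * a' q j - al q * a' p j else 0 end.
pose c2 (z : I + I * I) : R := match z with
  | inl k => if al k == 0 then c k else 0
  | inr (p, q) => if (0 < al p) && (al q < 0) then al p * c q - al q * c p else 0 end.
pose w2 (z : I + I * I) : R := match z with
  | inl k => if al k == 0 then w k else 0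
  | inr (p, q) => if (0 < al p) && (al q < 0) then al p * w q - al q * w p else 0 end.
have hw2 : forall z, 0 <= w2 z.
  case=> [k|[p q]] /=; first by case: ifP.
  case: ifP => // /andP[hp hq]; have := hw p; have := hw q; nra.
have [x' Hx'] : exists x' : 'I_n -> R, forall z, \sum_j a2 z j * x' j <= c2 z.
  apply: (IH _ a2 c2 w2 hw2) => eps he.
  have [x Hx] := H _ he.
  exists (fun j => x (widen_ord (leqnSn n) j)) => z.
  case: z => [k|[p q]] /=.
    case: ifP => [/eqP h0|_]; last by rewrite big1 ?mulr0 ?addr0 // => j _; rewrite mul0r.
    by have := Hx k; rewrite big_ord_recr /= -/(al k) h0 mul0r addr0.
  case: ifP => [/andP[hp hq]|_]; last by rewrite big1 ?mulr0 ?addr0 // => j _; rewrite mul0r.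
  rewrite sum_comb.
  have := Hx p; have := Hx q; rewrite !big_ord_recr /= -/(al p) -/(al q).
  rewrite /a'.
  set sp := \sum_(i < n) a p _ * _; set sq := \sum_(i < n) a q _ * _.
  move=> h1 h2.
  have e1 : 0 <= al p * (c q + eps * w q - (sq + al q * x ord_max)) by apply: mulr_ge0; lra.
  have e2 : 0 <= - al q * (c p + eps * w p - (sp + al p * x ord_max)) by apply: mulr_ge0; lra.
  have : 0 <= al p * (c q + eps * w q - (sq + al q * x ord_max)) + - al q * (c p + eps * w p - (sp + al p * x ord_max)) by lra.
  move=> h; lra.
pose s' k := \sum_(j < n) a' k j * x' j.
pose Lq := [seq (c q - s' q) / al q | q <- enum I & al q < 0].
pose Up := [seq (c p - s' p) / al p | p <- enum I & 0 < al p].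
have [t [Ht1 Ht2]] : exists t, (forall l, l \in Lq -> l <= t) /\ (forall u, u \in Up -> t <= u).
  apply: bounds_seq => l u /mapP[q]; rewrite mem_filter => /andP[hq _] -> /mapP[p].
  rewrite mem_filter => /andP[hp _] ->.
  have := Hx' (inr (p, q)); rewrite /= hp hq /= sum_comb -/(s' p) -/(s' q) => h.
  set l' := _ / al q; set u' := _ / al p.
  have el : al q * l' = c q - s' q by rewrite /l' mulrC divfK // lt_eqF.
  have eu : al p * u' = c p - s' p by rewrite /u' mulrC divfK // gt_eqF.
  have hpq : 0 < al p * - al q by apply: mulr_gt0; lra.
  nra.
pose x (j : 'I_n.+1) : R := if insub (val j) is Some j' then x' j' else t.
have xw : forall j : 'I_n, x (widen_ord (leqnSn n) j) = x' j.
  by move=> j; rewrite /x (valK j).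
have xm : x ord_max = t by rewrite /x insubF //= ltnn.
exists x => k; rewrite big_ord_recr /=.
under eq_bigr => j _ do rewrite xw.
rewrite -/(a' k) xm -/(al k) -/(s' k).
have [hk|hk|hk] := ltrgtP (al k) 0.
- have : (c k - s' k) / al k <= t.
    by apply: Ht1; apply/mapP; exists k => //; rewrite mem_filter hk mem_enum.
  set l' := _ / al k => h.
  have el : al k * l' = c k - s' k by rewrite /l' mulrC divfK // lt_eqF.
  nra.
- have : t <= (c k - s' k) / al k.
    by apply: Ht2; apply/mapP; exists k => //; rewrite mem_filter hk mem_enum.
  set u' := _ / al k => h.
  have eu : al k * u' = c k - s' k by rewrite /u' mulrC divfK // gt_eqF.
  nra.
- have := Hx' (inl k); rewrite /= hk eqxx mul0r addr0.
  done.
Qed.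

Lemma mulTE (R : realType) n m (A : 'M[R]_(n, m)) (x : 'cV[R]_n) i :
  (A^T *m x) i 0 = \sum_j A j i * x j 0.
Proof. by rewrite mxE; apply: eq_bigr => j _; rewrite !mxE. Qed.

Theorem lemma2 (R : realType) (n m : nat) (A : 'M[R]_(n, m)) (b : 'cV[R]_m)
    (F0plus : {set {set 'I_m}}) :
  (0 < n)%N -> (0 < m)%N ->
  (forall i : 'I_m, col i A != 0) ->
  (exists x : 'cV[R]_n, inK A b 0 x) ->
  (exists2 d : R, 0 < d & forall eps : R, 0 < eps -> eps < d ->
      faceFam A b eps = F0plus) ->
  F0plus \subset faceFam A b 0 /\ (#|F0plus| <= #|faceFam A b 0|)%N.
Proof.
move=> _ _ _ _ [d hd Hd].
have sub : F0plus \subset faceFam A b 0.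
  apply/subsetP => J HJ.
  have hJ : forall e, 0 < e -> e < d -> J \in faceFam A b e.
    by move=> e h1 h2; rewrite Hd.
  have hJ0 : J != set0.
    by have := hJ (d / 2) ltac:(lra) ltac:(lra); rewrite inE => /andP[].
  pose a (z : 'I_m + 'I_m) (j : 'I_n) : R := match z with
    | inl i => A j i | inr i => if i \in J then - A j i else 0 end.
  pose c (z : 'I_m + 'I_m) : R := match z with
    | inl i => b i 0 | inr i => if i \in J then - b i 0 else 0 end.
  have [x Hx] : exists x : 'I_n -> R, forall k, \sum_j a k j * x j <= c k.
    apply: (@fm R n _ a c (fun _ => 1)) => [k|eps he]; first exact: ler01.
    pose e := Num.min eps (Num.min (d / 2) (1 / 2)).
    have he0 : 0 < e by rewrite !lt_min he; apply/andP; split; lra.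
    have hed : e < d.
      apply: (le_lt_trans (y := d / 2)); last lra.
      by rewrite !ge_min lexx orbT.
    have hee : e <= eps by rewrite ge_min lexx.
    have he1 : e <= 1.
      apply: (le_trans (y := 1 / 2)); last lra.
      by rewrite !ge_min lexx !orbT.
    have hpow : forall i : nat, e ^+ i.+1 <= eps.
      move=> i; apply: le_trans hee; rewrite exprS; apply: ler_piMr; first lra.
      by apply: exprn_ile1; lra.
    have := hJ e he0 hed; rewrite inE => /andP[_ /asboolP [x Hx]].
    have hK : inK A b e x by case/set0Pn: hJ0 => i0 /Hx [].
    exists (fun j => x j 0) => [[i|i]] /=.
    - have := hK i; rewrite /beps mulTE.
      by have := hpow i; lra.
    - case: ifP => hi; last by rewrite big1 ?mulr1 ?add0r ?(ltW he) // => j _; rewrite mul0r.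
      have [+ _] := Hx i hi; rewrite /beps mulTE => h.
      under eq_bigr do rewrite mulNr.
      rewrite sumrN.
      have := exprn_ge0 i.+1 (ltW he0); lra.
  rewrite inE hJ0 /=; apply/asboolP; exists (\col_j x j) => i hi.
  have hA : forall i, (A^T *m \col_j x j) i 0 = \sum_j A j i * x j.
    by move=> i'; rewrite mxE; apply: eq_bigr => j _; rewrite !mxE.
  have hb : forall i, beps b 0 i = b i 0 by move=> i'; rewrite /beps expr0n addr0.
  have hK : inK A b 0 (\col_j x j) by move=> i'; rewrite hA hb; exact: (Hx (inl i')).
  split => //; rewrite hA hb; apply/eqP; rewrite eq_le (Hx (inl i)) /=.
  have := Hx (inr i); rewrite /= hi.
  under eq_bigr do rewrite mulNr.
  by rewrite sumrN lerN2.
by split => //; apply: subset_leq_card.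
Qed.
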